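(* Fix $\epsilon>0$. For all $u\in\mathbb{R}^k$, $y\in\mathcal{Y}$ and permutations $\pi$ of $[k]$, $\hat\Psi(\pi(u\odot y))=\pi(\hat\Psi(u)\odot y)$, where $(\pi x)_i=x_{\pi_i}$ and $\pi$ and $\odot y$ act on sets elementwise.
   Context: $[k]=\{1,\dots,k\}$, $\mathcal{Y}=\{-1,1\}^k$, $\mathcal{V}=\{-1,0,1\}^k$. $u\odot u'$ entrywise product, $|u|$ entrywise absolute value, $\mathbbm{1}$ all-ones; $\boxed{u}=\mathrm{sign}(u)\odot\min(|u|,\mathbbm{1})$. For $A\subseteq\mathbb{R}^k$, $d_\infty(A,u)=\inf_{a\in A}\|a-u\|_\infty$. For a permutation $\sigma$ and $i\in\{0,\dots,k\}$, $\mathbbm{1}_{\sigma,i}$ is the indicator vector of $\{\sigma_1,\dots,\sigma_i\}$; $V_{\sigma,y}=\{\mathbbm{1}_{\sigma,i}\odot y: i=0,\dots,k\}$; $\mathcal{V}^{\text{face}}=\bigcup_{\sigma,y\in\mathcal{Y}}2^{V_{\sigma,y}}$; $\hat\Psi(u)=\bigcap\{V\in\mathcal{V}^{\text{face}}:d_\infty(\mathrm{conv}\,V,\boxed{u})<\epsilon\}$. *)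

(* Defs.v *)
From HB Require Import structures.
From mathcomp Require Import all_boot all_order all_algebra all_fingroup.
From mathcomp Require Import all_classical all_reals all_analysis.
Set Implicit Arguments. Unset Strict Implicit. Unset Printing Implicit Defensive.
Import Order.TTheory GRing.Theory Num.Theory.
Local Open Scope classical_set_scope.
Local Open Scope ring_scope.

Section Defs.
Variables (R : realType) (k : nat).
Notation vec := ('I_k -> R).

Definition hprod (u v : vec) : vec := fun i => u i * v i.

Definition norminf (x : vec) : R := \big[Num.max/0]_(i < k) `|x i|.

(* d_inf(A,u) = inf_{a in A} ||a - u||_inf, in the extended reals (inf of empty set = +oo) *)
Definition dinf (A : set vec) (u : vec) : \bar R :=
  ereal_inf [set (norminf (fun i => a i - u i))%:E | a in A].

Definition conv (A : set vec) : set vec :=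
  [set x | exists (n : nat) (w : 'I_n -> R) (a : 'I_n -> vec),
     (forall t, 0 <= w t) /\ \sum_(t < n) w t = 1 /\ (forall t, A (a t)) /\
     (forall j, x j = \sum_(t < n) w t * a t j)].

Definition clip (u : vec) : vec := fun i => Num.sg (u i) * Num.min `|u i| 1.

Definition Ycal : set vec := [set y | forall i, y i = 1 \/ y i = -1].
Definition Vcal : set vec := [set v | forall i, v i = 1 \/ v i = 0 \/ v i = -1].

(* indicator of {σ_1,...,σ_i} (σ acting on 'I_k, 0-indexed: {σ 0,...,σ (i-1)}) *)
Definition ind (s : 'S_k) (i : nat) : vec :=
  fun j => if [exists t : 'I_k, (t < i)%N && (s t == j)] then 1 else 0.

Definition Vsy (s : 'S_k) (y : vec) : set vec :=
  [set v | exists i : nat, (i <= k)%N /\ v = hprod (ind s i) y].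

Definition Vface : set (set vec) :=
  [set V | exists (s : 'S_k) (y : vec), Ycal y /\ V `<=` Vsy s y].

Definition Psihat (eps : R) (u : vec) : set vec :=
  Vcal `&` \bigcap_(V in [set V | Vface V /\ (dinf (conv V) (clip u) < eps%:E)%E]) V.

Definition permv (p : 'S_k) (x : vec) : vec := fun i => x (p i).
End Defs.

(* Main.v *)
Require Import Defs.
From HB Require Import structures.
From mathcomp Require Import all_boot all_order all_algebra all_fingroup.
From mathcomp Require Import all_classical all_reals all_analysis.
Import Order.TTheory GRing.Theory Num.Theory.
Local Open Scope classical_set_scope.
Local Open Scope ring_scope.

Section Aux.
Variables (R : realType) (k : nat).
Notation vec := ('I_k -> R).

Definition Tf (c : vec) (q : 'S_k) (x : vec) : vec := fun j => x (q j) * c j.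

Lemma norm_ge (x : vec) i : `|x i| <= norminf x.
Proof. exact: (le_bigmax (0:R) (fun i => `|x i|) i). Qed.

Lemma norm_le (x : vec) M : 0 <= M -> (forall i, `|x i| <= M) -> norminf x <= M.
Proof.
move=> M0 H; rewrite /norminf; elim/big_ind: _ => //.
by move=> a b ha hb; rewrite ge_max ha hb.
Qed.

Lemma norm_ge0 (x : vec) : 0 <= norminf x.
Proof. have := norm_ge x; case: k x => [|n] x H. by rewrite /norminf big_ord0.
exact: le_trans (H ord0). Qed.

Lemma Ysq (c : vec) j : Ycal c -> c j * c j = 1.
Proof. by move=> /(_ j) [->|->]; rewrite ?mulr1 ?mulrNN ?mulr1. Qed.

Lemma Ynorm (c : vec) j : Ycal c -> `|c j| = 1.
Proof. by move=> /(_ j) [->|->]; rewrite ?normr1 ?normrN ?normr1. Qed.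

Lemma Ysg (c : vec) j : Ycal c -> Num.sg (c j) = c j.
Proof. by move=> /(_ j) [->|->]; rewrite ?sgr1 ?sgrN1. Qed.

Definition ci (c : vec) (q : 'S_k) : vec := fun i => c (q^-1%g i).

Lemma Ycal_ci c q : Ycal c -> Ycal (ci c q).
Proof. by move=> hc i; apply: hc. Qed.

Lemma TfK c q x : Ycal c -> Tf (ci c q) (q^-1)%g (Tf c q x) = x.
Proof.
move=> hc; apply/funext => i; rewrite /Tf /ci permKV -mulrA.
by rewrite Ysq // mulr1.
Qed.

Lemma TfKV c q x : Ycal c -> Tf c q (Tf (ci c q) (q^-1)%g x) = x.
Proof.
move=> hc; apply/funext => i; rewrite /Tf /ci permK -mulrA.
by rewrite Ysq // mulr1.
Qed.

Lemma norm_Tf c q x : Ycal c -> norminf x <= norminf (Tf c q x).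
Proof.
move=> hc; apply: norm_le; first exact: norm_ge0.
move=> i; apply: le_trans (norm_ge _ ((q^-1)%g i)).
by rewrite /Tf permKV normrM (Ynorm _ _ hc) mulr1.
Qed.

Lemma clip_Tf c q u : Ycal c -> clip (Tf c q u) = Tf c q (clip u).
Proof.
move=> hc; apply/funext => j; rewrite /clip /Tf normrM (Ynorm _ j hc) mulr1 sgrM (Ysg _ j hc).
by rewrite mulrAC.
Qed.

Lemma ind_perm (s q : 'S_k) i j : ind R s i ((q^-1)%g j) = ind R (s * q)%g i j.
Proof.
rewrite /ind; congr (if _ then _ else _); apply: eq_existsb => t.
congr (_ && _); rewrite permM; apply/eqP/eqP => [->|<-]; by rewrite ?permKV ?permK.
Qed.

Lemma Vface_pre c q W : Ycal c -> Vface W -> Vface (Tf c q @^-1` W).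
Proof.
move=> hc [s [y' [hy' HW]]]; exists (s * q)%g.
exists (fun i => y' ((q^-1)%g i) * c ((q^-1)%g i)); split.
  move=> i; case: (hy' ((q^-1)%g i)) => ->; rewrite ?mul1r ?mulN1r;
  case: (hc ((q^-1)%g i)) => ->; rewrite ?opprK; by [left|right].
move=> x /= /HW [i [hi hx]]; exists i; split => //.
have := TfK c q x hc; rewrite hx => <-; apply/funext => j.
by rewrite /Tf /hprod /ci ind_perm mulrA.
Qed.

Lemma Vcal_Tf c q v : Ycal c -> Vcal v -> Vcal (Tf c q v).
Proof.
move=> hc hv j; rewrite /Tf; case: (hc j) => ->; case: (hv (q j)) => [->|[->|->]];
rewrite ?mul0r ?mul1r ?mulr1 ?mulrN1 ?opprK ?oppr0; tauto.
Qed.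

Lemma conv_pre c q W a : Ycal c -> Defs.conv W a ->
  Defs.conv (Tf c q @^-1` W) (Tf (ci c q) (q^-1)%g a).
Proof.
move=> hc [n [w [aa [hw [hs [hW ha]]]]]].
exists n, w, (fun t => Tf (ci c q) (q^-1)%g (aa t)); split => //; split => //; split.
  by move=> t /=; rewrite TfKV.
move=> j; rewrite /Tf ha mulr_suml; apply: eq_bigr => t _; by rewrite mulrA.
Qed.

Lemma dinf_le c q W u : Ycal c ->
  (dinf (Defs.conv (Tf c q @^-1` W)) (clip u) <= dinf (Defs.conv W) (clip (Tf c q u)))%E.
Proof.
move=> hc; apply: le_ereal_inf_tmp => _ [a ha <-].
apply: (@le_trans _ _ (norminf (fun i => Tf (ci c q) (q^-1)%g a i - clip u i))%:E).
  apply: ereal_inf_lbound; exists (Tf (ci c q) (q^-1)%g a) => //; exact: conv_pre.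
rewrite lee_fin; apply: le_trans (norm_Tf c q _ hc) _.
rewrite le_eqVlt; apply/orP; left; apply/eqP; congr norminf.
apply/funext => j; rewrite clip_Tf //.
have E := congr1 (fun f => f j) (TfKV c q a hc); rewrite /= in E; by rewrite -E /Tf mulrBl.
Qed.

Lemma psi_incl eps c q u : Ycal c ->
  Tf c q @` Psihat eps u `<=` Psihat eps (Tf c q u).
Proof.
move=> hc _ [v [hv hI] <-]; split; first exact: Vcal_Tf.
move=> W [hW hd]; have : (Tf c q @^-1` W) v; last by [].
apply: hI; split; first exact: Vface_pre.
exact: le_lt_trans (dinf_le _ _ _ _ hc) hd.
Qed.

Lemma psi_eq eps c q u : Ycal c ->
  Psihat eps (Tf c q u) = Tf c q @` Psihat eps u.
Proof.
move=> hc; apply/seteqP; split; last exact: psi_incl.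
move=> w hw; exists (Tf (ci c q) (q^-1)%g w); last exact: TfKV.
rewrite -(TfK c q u hc); apply: psi_incl; first exact: Ycal_ci.
by exists w.
Qed.
End Aux.

Theorem lemma12 (R : realType) (k : nat) (eps : R) (heps : 0 < eps)
  (u : 'I_k -> R) (y : 'I_k -> R) (hy : Ycal y) (p : 'S_k) :
  Psihat eps (permv p (hprod u y)) =
  (permv p) @` ((fun v => hprod v y) @` Psihat eps u).
Proof.
have hc : Ycal (fun j => y (p j)) by move=> j; apply: hy.
have := @psi_eq R k eps (fun j => y (p j)) p u hc; rewrite /Tf => E.
have -> : permv p (hprod u y) = (fun j => u (p j) * y (p j)) by [].
rewrite E; apply/seteqP; split.
  by move=> _ [v hv <-]; exists (hprod v y); [exists v|].
by move=> _ [_ [v hv <-] <-]; exists v.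
Qed.
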